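(* Let $\tau$ be a lozenge tiling of a triangular region $T=T_d(I)$ and let $\sigma$ be an $n$-cycle of lozenges in $\tau$. Then the twist $\tau'$ of $\sigma$ in $\tau$ satisfies $\operatorname{msgn}(\tau')=(-1)^{n-1}\operatorname{msgn}(\tau)$.
   Context: $\mathcal T_d$ is an equilateral triangle of side length $d$ subdivided into unit triangles, upward ones labeled by degree $d-1$ monomials in $K[x,y,z]$, downward ones by degree $d-2$ monomials ($x^{d-1}$ top, $y^{d-1}$ bottom-left, $z^{d-1}$ bottom-right; an upward triangle sharing an edge with a downward one has label the downward label times a variable). For a monomial ideal $I$, $T_d(I)$ is the set of unit triangles whose labels are not in $I$. A lozenge is a union of two unit triangles sharing an edge; a lozenge tiling covers each unit triangle exactly once. Order monomials by graded reverse-lexicographic order; let $B_1,B_2,\dots$ be the downward and $W_1,W_2,\dots$ the upward triangles of $T$ in that order. A tiling $\tau$ determines the permutation $\pi$ with $B_i$ and $W_{\pi(i)}$ in a common lozenge, and $\operatorname{msgn}(\tau)=\operatorname{sgn}(\pi)$. An $n$-cycle of lozenges in $\tau$ is an ordered collection of distinct lozenges $\ell_1,\dots,\ell_n$ of $\tau$ such that the downward triangle of $\ell_i$ shares an edge with the upward triangle of $\ell_{i+1}$ for $1\le i<n$ and the downward triangle of $\ell_n$ shares an edge with the upward triangle of $\ell_1$. The twist of this cycle in $\tau$ is the tiling obtained by replacing $\ell_1,\dots,\ell_n$ by the lozenges formed by the downward triangle of $\ell_i$ and the upward triangle of $\ell_{i+1}$ ($1\le i<n$) and by the downward triangle of $\ell_n$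 and the upward triangle of $\ell_1$. *)

(* Defs.v *)
From mathcomp Require Import all_boot all_order all_algebra all_fingroup.
Set Implicit Arguments. Unset Strict Implicit. Unset Printing Implicit Defensive.

(* A monomial x^a y^b z^c of K[x,y,z] is represented by its exponent triple
   ((a, b), c).  The field K plays no role in the combinatorics. *)
Definition mono := (nat * nat * nat)%type.

Definition mx (m : mono) : nat := m.1.1.
Definition my (m : mono) : nat := m.1.2.
Definition mz (m : mono) : nat := m.2.

Definition mdeg (m : mono) : nat := mx m + my m + mz m.

Definition mdivides (m m' : mono) : bool :=
  [&& mx m <= mx m', my m <= my m' & mz m <= mz m'].

(* A monomial ideal, described by the set of monomials it contains:
   closed under multiplication by arbitrary monomials. *)
Definition monomial_ideal (I : pred mono) : Prop :=
  forall m m', I m -> mdivides m m' -> I m'.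

(* graded reverse lexicographic order with x > y > z:
   m >= m' iff deg m > deg m', or equal degrees and the last nonzero entry
   of m - m' is negative (or m = m'). *)
Definition grevlex_gt (m m' : mono) : bool :=
  (mdeg m > mdeg m') ||
  ((mdeg m == mdeg m') &&
   ((mz m < mz m') || ((mz m == mz m') && (my m < my m')))).
Definition grevlex_ge (m m' : mono) : bool := (m == m') || grevlex_gt m m'.

Definition small_monos (d : nat) : seq mono :=
  [seq (ab, c) | ab <- [seq (a, b) | a <- iota 0 d, b <- iota 0 d], c <- iota 0 d].

(* Downward triangles of T_d(I): labels of degree d-2 not in I, listed
   B_1, B_2, ... in (decreasing) grevlex order. *)
Definition downT (d : nat) (I : pred mono) : seq mono :=
  sort grevlex_ge [seq m <- small_monos d | (mdeg m + 2 == d) && ~~ I m].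

(* Upward triangles of T_d(I): labels of degree d-1 not in I, listed
   W_1, W_2, ... in (decreasing) grevlex order. *)
Definition upT (d : nat) (I : pred mono) : seq mono :=
  sort grevlex_ge [seq m <- small_monos d | (mdeg m + 1 == d) && ~~ I m].

(* A downward triangle with label b shares an edge with an upward triangle
   with label w iff w = b * x, b * y or b * z. *)
Definition madj (b w : mono) : bool :=
  [|| w == ((mx b).+1, my b, mz b),
      w == (mx b, (my b).+1, mz b) |
      w == (mx b, my b, (mz b).+1)].

(* A lozenge is a pair (downward label, upward label) of adjacent unit
   triangles; a tiling is a list of lozenges of T_d(I) covering each unit
   triangle of T_d(I) exactly once. *)
Definition is_tiling (d : nat) (I : pred mono) (tau : seq (mono * mono)) : bool :=
  [&& all (fun l => [&& l.1 \in downT d I, l.2 \in upT d I & madj l.1 l.2]) tau,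
      all (fun b => count (fun l => l.1 == b) tau == 1) (downT d I) &
      all (fun w => count (fun l => l.2 == w) tau == 1) (upT d I)].

Definition mono0 : mono := (0, 0, 0).

(* msgn tau = sgn(pi) where B_i and W_(pi i) lie in a common lozenge of tau.
   (For a non-tiling no such pi exists and the value 0 is a junk value.) *)
Definition msgn (d : nat) (I : pred mono) (tau : seq (mono * mono)) : int :=
  match [pick s : 'S_(size (downT d I)) |
           [forall i : 'I_(size (downT d I)), (nth mono0 (downT d I) i, nth mono0 (upT d I) (s i)) \in tau]]
  with
  | Some s => ((-1) ^+ odd_perm s)%R
  | None => 0%R
  end.

Definition is_cycle_in (tau sigma : seq (mono * mono)) : bool :=
  let n := size sigma in
  [&& uniq sigma, all (fun l => l \in tau) sigma &
      all (fun i => madj (nth (mono0, mono0) sigma i).1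
                         (nth (mono0, mono0) sigma (i.+1 %% n)).2) (iota 0 n)].

Definition twist (tau sigma : seq (mono * mono)) : seq (mono * mono) :=
  let n := size sigma in
  [seq l <- tau | l \notin sigma] ++
  [seq ((nth (mono0, mono0) sigma i).1, (nth (mono0, mono0) sigma (i.+1 %% n)).2)
  | i <- iota 0 n].

(* Main.v *)
Require Import Defs.
From mathcomp Require Import all_boot all_order all_algebra all_fingroup.
From mathcomp Require Import zify.
Set Implicit Arguments. Unset Strict Implicit. Unset Printing Implicit Defensive.

Lemma count1_eq (T : eqType) (p : pred T) (t : seq T) x y :
  count p t = 1 -> x \in t -> y \in t -> p x -> p y -> x = y.
Proof.
elim: t => [|z t IH] //=; rewrite !inE.
case pz: (p z) => /=.
- rewrite add1n => -[h0]; have : ~~ has p t by rewrite has_count h0.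
  move/hasPn => nh.
  move=> /orP[/eqP->|xt] /orP[/eqP->|yt] px py //.
  + by move: (nh _ yt); rewrite py.
  + by move: (nh _ xt); rewrite px.
  + by move: (nh _ xt); rewrite px.
- rewrite add0n => h1 /orP[/eqP xz|xt] /orP[/eqP yz|yt] px py.
  + by rewrite xz yz.
  + by move: px; rewrite xz pz.
  + by move: py; rewrite yz pz.
  + exact: IH.
Qed.

Lemma small_monos_uniq d : uniq (small_monos d).
Proof.
rewrite /small_monos; apply: allpairs_uniq.
- apply: allpairs_uniq; try exact: iota_uniq.
  by move=> [a b] [a' b'] _ _ /= [-> ->].
- exact: iota_uniq.
- by move=> [a b] [a' b'] _ _ /= [-> ->].
Qed.

Lemma downT_uniq d I : uniq (downT d I).
Proof. by rewrite sort_uniq filter_uniq // small_monos_uniq. Qed.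
Lemma upT_uniq d I : uniq (upT d I).
Proof. by rewrite sort_uniq filter_uniq // small_monos_uniq. Qed.

Definition func1 (t : seq (mono * mono)) :=
  forall l l', l \in t -> l' \in t -> l.1 = l'.1 -> l = l'.
Definition func2 (t : seq (mono * mono)) :=
  forall l l', l \in t -> l' \in t -> l.2 = l'.2 -> l = l'.


Lemma tiling_facts d I tau : is_tiling d I tau ->
  [/\ (forall l, l \in tau -> [/\ l.1 \in downT d I, l.2 \in upT d I & madj l.1 l.2]),
      (forall b, b \in downT d I -> exists2 l, l \in tau & l.1 = b),
      func1 tau & func2 tau].
Proof.
case/and3P => /allP ha /allP hb /allP hc.
have hA l : l \in tau -> [/\ l.1 \in downT d I, l.2 \in upT d I & madj l.1 l.2].
  by move/ha/and3P.
split => //.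
- move=> b /hb /eqP hc1.
  have : has (fun l => l.1 == b) tau by rewrite has_count hc1.
  by case/hasP => l lt /eqP <-; exists l.
- move=> l l' lt l't e.
  have [h1 _ _] := hA _ lt; have := hb _ h1 => /eqP h.
  by apply: (count1_eq h lt l't) => //=; rewrite e.
- move=> l l' lt l't e.
  have [_ h1 _] := hA _ lt; have := hc _ h1 => /eqP h.
  by apply: (count1_eq h lt l't) => //=; rewrite e.
Qed.

Lemma size_DU d I tau : is_tiling d I tau -> size (upT d I) = size (downT d I).
Proof.
move=> ht; case: (tiling_facts ht) => hA hB hf1 hf2.
have ut : uniq tau.
  apply: count_mem_uniq => x.
  case xt: (x \in tau).
  - apply/eqP; rewrite eqn_leq; apply/andP; split; last first.
      by rewrite -has_count; apply/hasP; exists x => /=.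
    have [h1 _ _] := hA _ xt; case/and3P: ht => _ /allP hb _.
    have := hb _ h1 => /eqP E; rewrite /= -E.
    by apply: sub_count => y /= /eqP ->.
  - rewrite /=; by apply/eqP; rewrite -leqn0 leqNgt -has_count; apply/hasP => -[y yt /= /eqP e];
      move: xt; rewrite -e yt.
have p1 : perm_eq [seq l.1 | l <- tau] (downT d I).
  apply: uniq_perm; first by rewrite map_inj_in_uniq // => l l' lt l't; apply: hf1.
    exact: downT_uniq.
  move=> b; apply/mapP/idP.
  - by case=> l lt ->; case: (hA _ lt).
  - by case/hB => l lt <-; exists l.
have p2 : perm_eq [seq l.2 | l <- tau] (upT d I).
  apply: uniq_perm; first by rewrite map_inj_in_uniq // => l l' lt l't; apply: hf2.
    exact: upT_uniq.
  move=> w; apply/mapP/idP.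
  - by case=> l lt ->; case: (hA _ lt).
  - move=> wU; case/and3P: ht => _ _ /allP hc; have := hc _ wU => /eqP hc1.
    have : has (fun l => l.2 == w) tau by rewrite has_count hc1.
    by case/hasP => l lt /eqP <-; exists l.
by rewrite -(perm_size p1) -(perm_size p2) !size_map.
Qed.

Lemma nthU_inj d I (a b : 'I_(size (downT d I))) :
  size (upT d I) = size (downT d I) ->
  nth mono0 (upT d I) a = nth mono0 (upT d I) b -> a = b.
Proof.
move=> hs /eqP; rewrite nth_uniq ?hs // ?upT_uniq // => /eqP e.
exact: val_inj.
Qed.

Lemma msgn_eq d I t (s : 'S_(size (downT d I))) :
  size (upT d I) = size (downT d I) -> func1 t ->
  (forall i : 'I_(size (downT d I)), (nth mono0 (downT d I) i, nth mono0 (upT d I) (s i)) \in t) ->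
  msgn d I t = ((-1) ^+ odd_perm s)%R.
Proof.
move=> hs hf hP; rewrite /msgn; case: pickP => [s' /forallP H|/(_ s) H].
- suff -> : s' = s by [].
  apply/permP => i; apply: (nthU_inj hs).
  by have := hf _ _ (H i) (hP i) erefl => -[].
- by exfalso; move/negbT/forallP: H; apply => i.
Qed.

Lemma msgn_exists d I t :
  size (upT d I) = size (downT d I) ->
  (forall l, l \in t -> l.1 \in downT d I /\ l.2 \in upT d I) ->
  (forall b, b \in downT d I -> exists2 l, l \in t & l.1 = b) ->
  func2 t ->
  exists s : 'S_(size (downT d I)),
    forall i : 'I_(size (downT d I)), (nth mono0 (downT d I) i, nth mono0 (upT d I) (s i)) \in t.
Proof.
move=> hs hA hB hf2.
set D := downT d I; set U := upT d I.
pose L (i : 'I_(size D)) := nth (mono0, mono0) t (find (fun l => l.1 == nth mono0 D i) t).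
have hL i : L i \in t /\ (L i).1 = nth mono0 D i.
  have : has (fun l => l.1 == nth mono0 D i) t.
    have [l lt le] := hB _ (mem_nth mono0 (ltn_ord i)).
    by apply/hasP; exists l => //; rewrite le.
  move=> hh; split; first by rewrite /L mem_nth // -has_find.
  by apply/eqP; exact: (nth_find (mono0, mono0) hh).
pose g (i : 'I_(size D)) : 'I_(size D) := insubd i (index (L i).2 U).
have hU i : (L i).2 \in U by have [/hA [] ] := hL i.
have vg i : val (g i) = index (L i).2 U.
  by rewrite /g insubdK // -topredE /= -hs index_mem.
have ginj : injective g.
  move=> i j /(congr1 val); rewrite !vg => e.
  have e2 : (L i).2 = (L j).2.
    by rewrite -(nth_index mono0 (hU i)) e nth_index.
  have := hf2 _ _ (proj1 (hL i)) (proj1 (hL j)) e2 => e3.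
  have : nth mono0 D i = nth mono0 D j by rewrite -(proj2 (hL i)) -(proj2 (hL j)) e3.
  move/eqP; rewrite nth_uniq // ?downT_uniq // => /eqP; exact: val_inj.
exists (perm ginj) => i; rewrite permE.
have -> : nth mono0 U (g i) = (L i).2 by rewrite vg nth_index.
by rewrite -(proj2 (hL i)) -surjective_pairing (proj1 (hL i)).
Qed.

Lemma cyc_aux N (p : 'I_N) (q : seq 'I_N) (s s' : 'S_N) :
  uniq (p :: q) ->
  (forall k, k < size q -> s' (nth p (p :: q) k) = s (nth p q k)) ->
  s' (last p q) = s p ->
  (forall x, x \notin p :: q -> s' x = s x) ->
  odd_perm s' = odd (size q) (+) odd_perm s.
Proof.
elim: q p s' => [|p1 r IH] p s' hu hk hl ho.
- have -> : s' = s.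
    apply/permP => x; case: (x =P p) => [->//|/eqP nx]; apply: ho.
    by rewrite inE.
  by [].
- set z := last p1 r.
  have hz : z \in p1 :: r by rewrite /z mem_last.
  have pn : p \notin p1 :: r by case/andP: hu.
  have pz : p != z by apply: contraNneq pn => ->.
  have zn : z = nth p1 (p1 :: r) (size r).
    by rewrite nth_last.
  pose s'' := (tperm p z * s')%g.
  have e : s' = (tperm p z * s'')%g by rewrite /s'' mulgA tperm2 mul1g.
  have hs x : s'' x = s' (tperm p z x) by rewrite /s'' permM.
  clearbody s''.
  have hu1 : uniq (p1 :: r) by case/andP: hu.
  rewrite e odd_mul_tperm pz (IH p1 s'') //=.
  + by case: (odd (size r)); case: (odd_perm s).
  + move=> k kr; rewrite hs.
    have xin : nth p1 (p1 :: r) k \in p1 :: r.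
      by apply: mem_nth; rewrite /= ltnS ltnW.
    have xp : nth p1 (p1 :: r) k != p by apply: contraNneq pn => <-.
    have xz : nth p1 (p1 :: r) k != z.
      rewrite zn nth_uniq //; last by rewrite /= ltnS ltnW.
      by rewrite neq_ltn kr.
    rewrite tpermD; last 2 first.
      by rewrite eq_sym.
      by rewrite eq_sym.
    have := hk k.+1; rewrite [size _]/= ltnS => /(_ kr).
    rewrite (set_nth_default p1 p); last by rewrite /= ltnS ltnW.
    move=> ->; rewrite (set_nth_default p1 p) //.
  + rewrite hs tpermR.
    by have := hk 0 erefl.
  + move=> x xn; rewrite hs.
    case: (x =P p) => [->|/eqP xp].
    * by rewrite tpermL.
    * have xz : x != z by apply: contraNneq xn => ->.
      rewrite tpermD; last 2 first.
        by rewrite eq_sym.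
        by rewrite eq_sym.
      by apply: ho; rewrite inE negb_or xp.
Qed.

Lemma cyc_mod N (ps : seq 'I_N) (s s' : 'S_N) (i0 : 'I_N) :
  uniq ps -> 0 < size ps ->
  (forall k, k < size ps -> s' (nth i0 ps k) = s (nth i0 ps (k.+1 %% size ps))) ->
  (forall x, x \notin ps -> s' x = s x) ->
  odd_perm s' = odd (size ps).-1 (+) odd_perm s.
Proof.
case: ps => [|p q] // hu _ hk ho; apply: (cyc_aux (p := p)) => //.
- move=> k kq; have kq1 : k < size (p :: q) by apply: ltnW.
  have kq2 : k.+1 < size (p :: q) by [].
  have := hk k kq1.
  rewrite (modn_small kq2) (set_nth_default p i0 kq1) (set_nth_default p i0 kq2).
  by move=> ->.
- have := hk (size q); rewrite [size _]/= ltnSn => /(_ isT).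
  rewrite modnn /= => <-.
  by have := nth_last i0 (p :: q) => /= ->.
Qed.

Lemma modS_inj n i j : 0 < n -> i < n -> j < n -> i.+1 %% n = j.+1 %% n -> i = j.
Proof.
move=> n0 hi hj.
have e k : k < n -> k.+1 %% n = (if k.+1 == n then 0 else k.+1).
  move=> kn; case: eqP => [->|ne]; first exact: modnn.
  by apply: modn_small; rewrite ltn_neqAle; apply/andP; split; [apply/eqP|].
rewrite (e _ hi) (e _ hj).
case: eqP => [h1|h1]; case: eqP => [h2|h2] h; lia.
Qed.

Theorem lemma4p1 (d : nat) (I : pred mono) (tau sigma : seq (mono * mono)) (n : nat) :
  monomial_ideal I ->
  is_tiling d I tau ->
  0 < n -> size sigma = n ->
  is_cycle_in tau sigma ->
  msgn d I (twist tau sigma) = ((-1) ^+ n.-1 * msgn d I tau)%R.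
Proof.
move=> _ ht n0 sz hc.
have [hA hB hf1 hf2] := tiling_facts ht.
have hs := size_DU ht.
case/and3P: hc => us /allP sigt _.
pose nl k := nth (mono0, mono0) sigma k.
have nls k : k < n -> nl k \in sigma by move=> kn; rewrite /nl mem_nth // sz.
have nlt k : k < n -> nl k \in tau by move=> /nls /sigt.
have modlt k : k.+1 %% n < n by apply: ltn_pmod.
have twE l : l \in twist tau sigma ->
    (l \in tau /\ l \notin sigma) \/
    exists2 i, i < n & l = ((nl i).1, (nl (i.+1 %% n)).2).
  rewrite /twist mem_cat mem_filter sz => /orP[/andP[h1 h2]|/mapP[i]].
  - by left.
  - by rewrite mem_iota add0n => /andP[_ hi] ->; right; exists i.
have twN i : i < n -> ((nl i).1, (nl (i.+1 %% n)).2) \in twist tau sigma.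
  move=> hi; rewrite /twist mem_cat sz; apply/orP; right.
  by apply/mapP; exists i => //; rewrite mem_iota add0n.
have twO l : l \in tau -> l \notin sigma -> l \in twist tau sigma.
  by move=> h1 h2; rewrite /twist mem_cat mem_filter h1 h2.
have nlinj i j : i < n -> j < n -> nl i = nl j -> i = j.
  by move=> hi hj /eqP; rewrite /nl nth_uniq ?sz // => /eqP.
have tA l : l \in twist tau sigma -> l.1 \in downT d I /\ l.2 \in upT d I.
  case/twE => [[/hA [h1 h2 _] _]|[i hi ->]]; first by [].
  have [h1 _ _] := hA _ (nlt _ hi); have [_ h2 _] := hA _ (nlt _ (modlt i)).
  by [].
have tB b : b \in downT d I -> exists2 l, l \in twist tau sigma & l.1 = b.
  move=> /hB [l lt <-]; case ls: (l \in sigma).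
  - have hi : index l sigma < n by rewrite -sz index_mem.
    exists ((nl (index l sigma)).1, (nl ((index l sigma).+1 %% n)).2).
      exact: twN.
    by rewrite /= /nl nth_index.
  - by exists l => //; apply: twO; rewrite ?ls.
have tf1 : func1 (twist tau sigma).
  move=> l l' /twE[[lt ls]|[i hi ->]] /twE[[l't l's]|[j hj ->]] /= e.
  - exact: hf1.
  - have := hf1 _ _ lt (nlt _ hj) e => el; by move: ls; rewrite el nls.
  - have := hf1 _ _ l't (nlt _ hi) (esym e) => el; by move: l's; rewrite el nls.
  - have := hf1 _ _ (nlt _ hi) (nlt _ hj) e => /nlinj -> //.
have tf2 : func2 (twist tau sigma).
  move=> l l' /twE[[lt ls]|[i hi ->]] /twE[[l't l's]|[j hj ->]] /= e.
  - exact: hf2.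
  - have := hf2 _ _ lt (nlt _ (modlt j)) e => el; by move: ls; rewrite el nls.
  - have := hf2 _ _ l't (nlt _ (modlt i)) (esym e) => el; by move: l's; rewrite el nls.
  - have := hf2 _ _ (nlt _ (modlt i)) (nlt _ (modlt j)) e => /nlinj.
    by move=> /(_ (modlt i) (modlt j)) /(modS_inj n0 hi hj) ->.
have [s Ps] := msgn_exists hs (fun l lt => let: And3 a b _ := hA l lt in conj a b) hB hf2.
have [s' Ps'] := msgn_exists hs tA tB tf2.
rewrite (msgn_eq hs hf1 Ps) (msgn_eq hs tf1 Ps').
set D := downT d I; set U := upT d I.
have N0 : 0 < size D.
  have [h1 _ _] := hA _ (nlt 0 n0).
  by apply: (leq_ltn_trans (leq0n (index (nl 0).1 D))); rewrite index_mem.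
pose i0 : 'I_(size D) := Ordinal N0.
pose ps := [seq insubd i0 (index l.1 D) | l <- sigma].
have vps l : l \in sigma -> val (insubd i0 (index l.1 D)) = index l.1 D.
  move=> ls; have [h1 _ _] := hA _ (sigt _ ls).
  by rewrite insubdK // -topredE /= index_mem.
have nthps k : k < n -> nth i0 ps k = insubd i0 (index (nl k).1 D).
  by move=> kn; rewrite /ps (nth_map (mono0, mono0)) ?sz.
have Dps k : k < n -> nth mono0 D (nth i0 ps k) = (nl k).1.
  move=> kn; rewrite nthps // vps ?nls // nth_index //.
  by have [h1 _ _] := hA _ (nlt _ kn).
have ups : uniq ps.
  rewrite /ps map_inj_in_uniq // => l l' ls l's /(congr1 val).
  rewrite !vps // => e; apply: hf1; [exact: sigt|exact: sigt|].
  have [h1 _ _] := hA _ (sigt _ ls); have [h1' _ _] := hA _ (sigt _ l's).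
  by rewrite -(nth_index mono0 h1) e nth_index.
have szps : size ps = n by rewrite size_map.
have key : odd_perm s' = odd (size ps).-1 (+) odd_perm s.
  apply: (cyc_mod (i0 := i0)) => //; rewrite ?szps //.
  - move=> k kn; apply: (nthU_inj hs).
    have e1 := tf1 _ _ (Ps' (nth i0 ps k)) (twN _ kn); rewrite /= (Dps _ kn) in e1.
    have e2 := hf1 _ _ (Ps (nth i0 ps (k.+1 %% n))) (nlt _ (modlt k)).
    rewrite /= (Dps _ (modlt k)) in e2.
    move: (congr1 snd (e1 erefl)) (congr1 snd (e2 erefl)) => /= -> ->.
    by [].
  - move=> x xn; apply: (nthU_inj hs).
    have xt := Ps x.
    have xs : (nth mono0 D x, nth mono0 U (s x)) \notin sigma.
      apply: contra xn => xs; apply/mapP; exists (nth mono0 D x, nth mono0 U (s x)) => //.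
      apply: val_inj; rewrite vps //=.
      by rewrite index_uniq ?downT_uniq.
    have := tf1 _ _ (Ps' x) (twO _ xt xs) erefl.
    by move=> /(congr1 snd).
by rewrite key szps GRing.signr_addb GRing.signr_odd.
Qed.
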